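(* Let $E$ be a directed graph, $R$ a unital ring, $X\subseteq\mathrm{Reg}(E)$, $B=M(G,I)$ a Brandt groupoid, $S=B\cup\{0\}$ the associated Brandt semigroup, and $w$ a weight mapping. Then $C_R^X(E)=\bigoplus_{s\in S}(C_R^X(E))_s$ is an $S$-graded ring inducing $S$ which admits an anti-graded involution. In particular $L_R(E)=C_R^{\mathrm{Reg}(E)}(E)$ is an $S$-graded ring with an anti-graded involution.
   Context: Directed graph $E=(E^0,E^1,\mathrm{r},\mathrm{s})$, paths $E^*$ (including vertices as length-$0$ paths), regular vertices $\mathrm{Reg}(E)$ (vertices $v$ with $\mathrm{s}^{-1}(v)$ nonempty and finite). For unital $R$ and $X\subseteq\mathrm{Reg}(E)$, the Cohn path algebra $C_R^X(E)$ is the $R$-algebra generated by $E^0$, $E^1$, $\{\alpha^*:\alpha\in E^1\}$ (with $R$ commuting with generators) subject to $vv'=\delta_{v,v'}v$; $\mathrm{s}(\alpha)\alpha=\alpha\mathrm{r}(\alpha)=\alpha$, $\mathrm{r}(\alpha)\alpha^*=\alpha^*\mathrm{s}(\alpha)=\alpha^*$; $\alpha^*\alpha'=\delta_{\alpha,\alpha'}\mathrm{r}(\alpha)$; $\sum_{\mathrm{s}(\alpha)=v}\alpha\alpha^*=v$ for $v\in X$; $L_R(E)=C_R^{\mathrm{Reg}(E)}(E)$. For $\mu=\alpha_1\cdots\alpha_k$, $\mu^*=\alpha_k^*\cdots\alpha_1^*$, $v^*=v$. Brandt groupoid: for a group $G$ and a set $I$, $M(G,I)=I\times G\times I$ with partial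 product $(i,g,j)(k,h,l)=(i,gh,l)$ if $j=k$, undefined otherwise. $S=B\cup\{0\}$, undefined products set to $0$, $0$ absorbing; $I(B)$ denotes the idempotents of $B$ (elements $(i,1_G,i)$); $(i,g,j)^{-1}=(j,g^{-1},i)$, $0^{-1}=0$. Weight mapping: a map $w$ with $w(E^0)\subseteq I(B)$, $w(E^1)\subseteq B$, $w(\alpha^* )=w(\alpha)^{-1}$, and $w(\mathrm{s}(\alpha))w(\alpha)=w(\alpha)=w(\alpha)w(\mathrm{r}(\alpha))$ for all $\alpha\in E^1$; extended multiplicatively: $w(\alpha_1\cdots\alpha_k)=w(\alpha_1)\cdots w(\alpha_k)$, $w(\mu\eta^* )=w(\mu)w(\eta)^{-1}$. For $s\in B$, $(C_R^X(E))_s$ is the $R$-linear span of monomials $\mu\eta^*$ ($\mu,\eta\in E^*$, $\mathrm{r}(\mu)=\mathrm{r}(\eta)$) with $w(\mu\eta^* )=s$; $(C_R^X(E))_0=\{0\}$. $S$-graded ring inducing $S$: $R'=\bigoplus_{s\in S}R'_s$ (direct sum of additive subgroups) with $R'_sR'_t\subseteq R'_{st}$ whenever $st$ is defined and $R'_sR'_t\ne0$ only if $st$ is defined (here in $S$ with zero, $R'_0=0$). An anti-graded involution is a map $^*:R'\to R'$ with $(x^* )^*=x$ for all $x$ and $(R'_s)^*=R'_{s^{-1}}$ for all $s\in S$. *)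

(* Defs.v *)
From HB Require Import structures.
From mathcomp Require Import all_boot all_algebra.
From Stdlib Require Import ClassicalEpsilon.
From Stdlib Require List.

Set Implicit Arguments.
Unset Strict Implicit.
Unset Printing Implicit Defensive.

Import GRing.Theory.
Local Open Scope ring_scope.

Record group_on (G : Type) := GroupOn {
  gmul : G -> G -> G;
  gone : G;
  ginv : G -> G;
  gmulA : forall x y z, gmul x (gmul y z) = gmul (gmul x y) z;
  gmul1g : forall x, gmul gone x = x;
  gmulVg : forall x, gmul (ginv x) x = gone }.

(* Brandt groupoid B = M(G,I) = I x G x I; the Brandt semigroup
   S = B u {0} is  option B  with 0 = None. *)
Section Brandt.
Variables (I G : Type) (gG : group_on G).

Definition bmul (a b : option (I * G * I)) : option (I * G * I) :=
  match a, b with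
  | Some (i, g, j), Some (k, h, l) =>
      if excluded_middle_informative (j = k) then Some (i, gmul gG g h, l)
      else None
  | _, _ => None
  end.

Definition binv (a : option (I * G * I)) : option (I * G * I) :=
  match a with
  | Some (i, g, j) => Some (j, ginv gG g, i)
  | None => None
  end.

Definition is_idem (b : I * G * I) : Prop := bmul (Some b) (Some b) = Some b.
End Brandt.

Section Graph.
Variables (V Ed : Type) (src rng : Ed -> V).

(* regular vertices: s^{-1}(v) nonempty and finite *)
Definition regular (v : V) : Prop :=
  exists l : seq Ed, l <> [::] /\ List.NoDup l /\
    forall a, List.In a l <-> src a = v.

(* paths: (v, l) with l a sequence of edges starting at v
   (l = [::] is the length-0 path v) *)
Fixpoint path_from (v : V) (l : seq Ed) : Prop :=
  match l with
  | [::] => True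
  | a :: l' => src a = v /\ path_from (rng a) l'
  end.

Fixpoint path_rng (v : V) (l : seq Ed) : V :=
  match l with
  | [::] => v
  | a :: l' => path_rng (rng a) l'
  end.

(* generators of the Cohn path algebra: vertices, edges, ghost edges *)
Inductive gen := Gv of V | Ge of Ed | Gs of Ed.

(* nonempty words in the generators (the algebra is non-unital) *)
Definition word := (gen * seq gen)%type.
Definition wcat (u w : word) : word := (u.1, u.2 ++ w.1 :: w.2).
Definition gw (g : gen) : word := (g, [::]).
Definition w2 (g h : gen) : word := (g, [:: h]).

(* word of the monomial mu eta-star, mu = (v,l), eta = (v',l') *)
Definition mono_word (v : V) (l : seq Ed) (v' : V) (l' : seq Ed) : word :=
  match [seq Ge a | a <- l] ++ [seq Gs a | a <- rev l'] with
  | [::] => gw (Gv v)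
  | g :: gs => (g, gs)
  end.

Variable R : pzRingType.

(* The free (non-unital) R-algebra on the generators, with R commuting
   with the generators: formal sums  sum r_i w_i  (w_i nonempty words). *)
Definition fsum := seq (R * word).

Definition fscale_l (r : R) (x : fsum) : fsum := [seq (r * p.1, p.2) | p <- x].
Definition fscale_r (r : R) (x : fsum) : fsum := [seq (p.1 * r, p.2) | p <- x].
Definition fmul (x y : fsum) : fsum :=
  [seq (p.1 * q.1, wcat p.2 q.2) | p <- x, q <- y].
(* coefficient of the word w in x (equality in the free algebra) *)
Definition coef (x : fsum) (w : word) : R :=
  \sum_(p <- x) (if excluded_middle_informative (p.2 = w) then p.1 else 0).

Variable X : V -> Prop.

Inductive crel : fsum -> Prop :=
  | rel_vv v : crel [:: (1, w2 (Gv v) (Gv v)); (-1, gw (Gv v))]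
  | rel_vv' v v' : v <> v' -> crel [:: (1, w2 (Gv v) (Gv v'))]
  | rel_se a : crel [:: (1, w2 (Gv (src a)) (Ge a)); (-1, gw (Ge a))]
  | rel_er a : crel [:: (1, w2 (Ge a) (Gv (rng a))); (-1, gw (Ge a))]
  | rel_rs a : crel [:: (1, w2 (Gv (rng a)) (Gs a)); (-1, gw (Gs a))]
  | rel_ss a : crel [:: (1, w2 (Gs a) (Gv (src a))); (-1, gw (Gs a))]
  | rel_ce a : crel [:: (1, w2 (Gs a) (Ge a)); (-1, gw (Gv (rng a)))]
  | rel_ce' a a' : a <> a' -> crel [:: (1, w2 (Gs a) (Ge a'))]
  | rel_ck v (l : seq Ed) : X v -> List.NoDup l ->
      (forall a, List.In a l <-> src a = v) ->
      crel ([seq (1, w2 (Ge a) (Gs a)) | a <- l] ++ [:: (-1, gw (Gv v))]).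

(* the (two-sided, R-stable) ideal generated by the relations,
   as a set of representatives in the free algebra *)
Inductive cideal : fsum -> Prop :=
  | ci_rel x : crel x -> cideal x
  | ci_nil : cideal [::]
  | ci_add x y : cideal x -> cideal y -> cideal (x ++ y)
  | ci_lmul a x : cideal x -> cideal (fmul a x)
  | ci_rmul x a : cideal x -> cideal (fmul x a)
  | ci_lsc r x : cideal x -> cideal (fscale_l r x)
  | ci_rsc r x : cideal x -> cideal (fscale_r r x)
  | ci_free x y : (forall w, coef x w = coef y w) -> cideal x -> cideal y.

(* equality in C_R^X(E) = free algebra / cideal *)
Definition ceq (x y : fsum) : Prop := cideal (x ++ fscale_l (-1) y).

Variables (I G : Type) (gG : group_on G).
Variables (wv : V -> I * G * I) (we : Ed -> I * G * I).

Definition weight_mapping : Prop :=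
  (forall v, is_idem gG (wv v)) /\
  (forall a, bmul gG (Some (wv (src a))) (Some (we a)) = Some (we a) /\
             bmul gG (Some (we a)) (Some (wv (rng a))) = Some (we a)).

Definition wpath (v : V) (l : seq Ed) : option (I * G * I) :=
  match l with
  | [::] => Some (wv v)
  | a :: l' => foldl (fun acc e => bmul gG acc (Some (we e))) (Some (we a)) l'
  end.

Definition wmono v l v' l' : option (I * G * I) :=
  bmul gG (wpath v l) (binv gG (wpath v' l')).

Definition span_w (s : I * G * I) (x : fsum) : Prop :=
  List.Forall (fun p => exists v l v' l',
      path_from v l /\ path_from v' l' /\ path_rng v l = path_rng v' l' /\
      p.2 = mono_word v l v' l' /\ wmono v l v' l' = Some s) x.

(* the homogeneous component (C_R^X(E))_t, t in S, as a set of
   representatives; (C_R^X(E))_0 = {0} *)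
Definition comp (t : option (I * G * I)) (x : fsum) : Prop :=
  match t with
  | None => cideal x
  | Some s => exists y, span_w s y /\ ceq x y
  end.

Definition graded_ring_inducing : Prop :=
  (forall t, comp t [::] /\
     (forall x y, comp t x -> comp t y -> comp t (x ++ y)) /\
     (forall x, comp t x -> comp t (fscale_l (-1) x))) /\
  (forall x, exists l : seq ((I * G * I) * fsum),
     List.Forall (fun p => comp (Some p.1) p.2) l /\
     ceq x (flatten [seq p.2 | p <- l])) /\
  (forall l : seq ((I * G * I) * fsum),
     List.NoDup [seq p.1 | p <- l] ->
     List.Forall (fun p => comp (Some p.1) p.2) l ->
     cideal (flatten [seq p.2 | p <- l]) ->
     List.Forall (fun p => cideal p.2) l) /\
  (* C_s C_t inside C_{st} (st = 0 in S exactly when undefined in B) *)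
  (forall s t x y, comp s x -> comp t y -> comp (bmul gG s t) (fmul x y)).

(* an anti-graded involution on C_R^X(E) (a map on the quotient,
   given by a representative-respecting map on the free algebra) *)
Definition has_anti_graded_involution : Prop :=
  exists f : fsum -> fsum,
    (forall x y, ceq x y -> ceq (f x) (f y)) /\
    (forall x, ceq (f (f x)) x) /\
    (forall t x, comp t x -> comp (binv gG t) (f x)) /\
    (forall t x, comp (binv gG t) x -> exists y, comp t y /\ ceq (f y) x).

End Graph.

(* Main.v *)
Require Import Defs.
From HB Require Import structures.
From mathcomp Require Import all_boot all_algebra.
From Stdlib Require Import ClassicalEpsilon.
From Stdlib Require List.
Set Implicit Arguments.
Unset Strict Implicit.
Unset Printing Implicit Defensive.
Import GRing.Theory.
Local Open Scope ring_scope.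

Section Grp.
Variables (G : Type) (gG : group_on G).
Local Notation "x * y" := (gmul gG x y).
Local Notation "1" := (gone gG).
Local Notation "x ^-1" := (ginv gG x).

Lemma gmulgV x : x * x^-1 = 1.
Proof.
rewrite -(gmul1g gG (x * x^-1)) -(gmulVg gG (x^-1)) -(gmulA gG) (gmulA gG (x^-1) x).
by rewrite (gmulVg gG x) (gmul1g gG) (gmulVg gG).
Qed.
Lemma gmulg1 x : x * 1 = x.
Proof. by rewrite -(gmulVg gG x) (gmulA gG) gmulgV (gmul1g gG). Qed.
Lemma gcancel x y : x * y = x -> y = 1.
Proof. by move=> h; rewrite -(gmul1g gG y) -(gmulVg gG x) -(gmulA gG) h (gmulVg gG). Qed.
Lemma ginvK x : (x^-1)^-1 = x.
Proof. by rewrite -[RHS](gmul1g gG) -(gmulVg gG (x^-1)) -(gmulA gG) (gmulVg gG) gmulg1. Qed.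
Lemma ginv_uniq a b : a * b = 1 -> a^-1 = b.
Proof. by move=> h; rewrite -[LHS]gmulg1 -h (gmulA gG) (gmulVg gG) (gmul1g gG). Qed.
Lemma ginv_mul x y : (x * y)^-1 = y^-1 * x^-1.
Proof.
apply: ginv_uniq.
by rewrite -(gmulA gG) (gmulA gG y) gmulgV (gmul1g gG) gmulgV.
Qed.
Lemma ginv1 : 1^-1 = 1.
Proof. by rewrite -[LHS](gmul1g gG) gmulgV. Qed.
End Grp.

Section Brandt.
Variables (I G : Type) (gG : group_on G).
Notation B := (I * G * I)%type.
Notation bm := (bmul gG).
Notation bi := (binv gG).
Notation emi := excluded_middle_informative.
Implicit Types (i j k l m o : I) (g h n : G) (a b c : option B) (x y e : B).

Lemma bmulE i g j h l : bm (Some (i, g, j)) (Some (j, h, l)) = Some (i, gmul gG g h, l).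
Proof. by rewrite /=; case: emi. Qed.
Lemma bmulN i g j k h l : j <> k -> bm (Some (i, g, j)) (Some (k, h, l)) = None.
Proof. by move=> ne; rewrite /=; case: emi. Qed.
Lemma bmul0l a : bm None a = None. Proof. by []. Qed.
Lemma bmul0r a : bm a None = None. Proof. by case: a => [[[]]|]. Qed.

Lemma bmulA a b c : bm (bm a b) c = bm a (bm b c).
Proof.
case: a => [[[i g] j]|]; last by [].
case: b => [[[k h] l]|]; last by rewrite !bmul0r.
case: c => [[[m n] o]|]; last by rewrite !bmul0r.
have [<-|njk] := emi (j = k); last first.
  rewrite (bmulN _ _ _ _ njk) bmul0l.
  have [<-|nlm] := emi (l = m); last by rewrite (bmulN _ _ _ _ nlm) bmul0r.
  by rewrite bmulE bmulN.
rewrite bmulE.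
have [<-|nlm] := emi (l = m); last by rewrite !(bmulN _ _ _ _ nlm) bmul0r.
by rewrite !bmulE gmulA.
Qed.

Lemma binvK a : bi (bi a) = a.
Proof. by case: a => [[[i g] j]|] //=; rewrite ginvK. Qed.

Lemma binvS i g j : bi (Some (i, g, j)) = Some (j, ginv gG g, i).
Proof. by []. Qed.
Lemma binv_mul a b : bi (bm a b) = bm (bi b) (bi a).
Proof.
case: a => [[[i g] j]|]; last by rewrite bmul0r.
case: b => [[[k h] l]|]; last by [].
have [<-|njk] := emi (j = k); last by rewrite !bmulN // => e; apply: njk.
rewrite (bmulE i g j h l) !binvS (bmulE l (ginv gG h) j (ginv gG g) i).
by rewrite ginv_mul.
Qed.

Lemma idemP x : bm (Some x) (Some x) = Some x -> exists i, x = (i, gone gG, i).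
Proof.
case: x => [[i g] j].
have [<-|nij] := emi (j = i); last by rewrite bmulN.
rewrite (bmulE j g j g j) => -[e]; rewrite (gcancel e); by exists j.
Qed.

Lemma bmul_idem_r x e : bm (Some x) (Some e) = Some x -> exists i g j, x = (i, g, j) /\ e = (j, gone gG, j).
Proof.
case: x e => [[i g] j] [[k h] l].
have [<-|njk] := emi (j = k); last by rewrite bmulN.
rewrite (bmulE i g j h l) => -[e ->]; rewrite (gcancel e); by exists i, g, j.
Qed.

Lemma bmul_idem_l x e : bm (Some e) (Some x) = Some x -> exists i g j, x = (i, g, j) /\ e = (i, gone gG, i).
Proof.
case: x e => [[i g] j] [[k h] l].
have [<-|nlk] := emi (l = i); last by rewrite bmulN.
rewrite (bmulE k h l g j) => -[ek e2].
have : gmul gG (gmul gG h g) (ginv gG g) = gmul gG g (ginv gG g) by rewrite e2.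
by rewrite -gmulA !gmulgV gmulg1 => ->; exists l, g, j; rewrite ek.
Qed.
End Brandt.


Lemma Forall_allpairs (T1 T2 T3 : Type) (P1 : T1 -> Prop) (P2 : T2 -> Prop) (P3 : T3 -> Prop)
  (f : T1 -> T2 -> T3) s t : List.Forall P1 s -> List.Forall P2 t ->
  (forall (u1 : T1) (u2 : T2), P1 u1 -> P2 u2 -> P3 (f u1 u2)) -> List.Forall P3 [seq f u1 u2 | u1 <- s, u2 <- t].
Proof.
move=> hs ht hf; elim: hs => [|p s0 hp _ IH]; first by constructor.
rewrite allpairs_cons; apply/List.Forall_app; split => //.
by elim: ht {IH} => [|q t0 hq _ IHt] /=; constructor => //; apply: hf.
Qed.

Section Main.
Variables (R : pzRingType) (V Ed : Type) (src rng : Ed -> V) (X : V -> Prop).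
Notation F := (fsum V Ed R).
Notation J := (@cideal V Ed src rng R X).
Notation CEQ := (@ceq V Ed src rng R X).
Notation emi := excluded_middle_informative.

Definition feq (x y : F) := forall w, coef x w = coef y w.

Lemma coef_nil w : coef ([::] : F) w = 0.
Proof. by rewrite /coef big_nil. Qed.
Lemma coef_cons (p : R * word V Ed) (x : F) w :
  coef (p :: x) w = (if emi (p.2 = w) then p.1 else 0) + coef x w.
Proof. by rewrite /coef big_cons. Qed.
Lemma coef_cat (x y : F) w : coef (x ++ y) w = coef x w + coef y w.
Proof. by rewrite /coef big_cat. Qed.
Lemma coef_sl r (x : F) w : coef (fscale_l r x) w = r * coef x w.
Proof.
rewrite /coef /fscale_l big_map mulr_sumr; apply: eq_bigr => p _ /=.
by case: emi => ?; rewrite ?mulr0.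
Qed.
Lemma coef_sr r (x : F) w : coef (fscale_r r x) w = coef x w * r.
Proof.
rewrite /coef /fscale_r big_map mulr_suml; apply: eq_bigr => p _ /=.
by case: emi => ?; rewrite ?mul0r.
Qed.
Lemma coef_fmul (x y : F) w : coef (fmul x y) w =
  \sum_(p <- x) \sum_(q <- y) (if emi (wcat p.2 q.2 = w) then p.1 * q.1 else 0).
Proof. by rewrite /coef /fmul big_allpairs_dep. Qed.

Lemma J_feq x y : J x -> feq x y -> J y.
Proof. by move=> Jx e; apply: (ci_free (x:=x)). Qed.

Lemma feq_refl x : feq x x. Proof. by []. Qed.

Lemma ceq_refl x : CEQ x x.
Proof.
apply: (J_feq (x:=[::])); first exact: ci_nil. move=> w; rewrite coef_nil coef_cat coef_sl.
by rewrite mulN1r subrr.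
Qed.

Lemma ceq_sym x y : CEQ x y -> CEQ y x.
Proof.
move=> h; apply: (J_feq (ci_lsc (-1) h)) => w.
rewrite !coef_sl !coef_cat !coef_sl !mulN1r opprD opprK addrC //.
Qed.

Lemma ceq_trans x y z : CEQ x y -> CEQ y z -> CEQ x z.
Proof.
move=> h1 h2; apply: (J_feq (ci_add h1 h2)) => w.
rewrite !coef_cat !coef_sl !mulN1r addrA subrK //.
Qed.

Lemma ceq_cat x x' y y' : CEQ x x' -> CEQ y y' -> CEQ (x ++ y) (x' ++ y').
Proof.
move=> h1 h2; apply: (J_feq (ci_add h1 h2)) => w.
rewrite !coef_cat !coef_sl !coef_cat !mulN1r opprD.
by rewrite -!addrA; congr (_ + _); rewrite addrCA.
Qed.

Lemma ceq_J x y : CEQ x y -> J y -> J x.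
Proof.
move=> h1 h2; apply: (J_feq (ci_add h1 h2)) => w.
by rewrite !coef_cat !coef_sl mulN1r subrK.
Qed.

Lemma J_ceq0 x : J x -> CEQ x [::].
Proof.
move=> h; apply: (J_feq h) => w.
by rewrite !coef_cat coef_sl coef_nil mulr0 addr0.
Qed.

Lemma ceq0_J x : CEQ x [::] -> J x.
Proof.
move=> h; apply: (J_feq h) => w.
by rewrite !coef_cat coef_sl coef_nil mulr0 addr0.
Qed.

Lemma ceq_sl r x y : CEQ x y -> CEQ (fscale_l r x) (fscale_l r y).
Proof.
move=> h; apply: (J_feq (ci_lsc r h)) => w.
rewrite coef_sl !coef_cat !coef_sl !mulN1r mulrDr mulrN //.
Qed.

Lemma ceq_fmul_l a x y : CEQ x y -> CEQ (fmul a x) (fmul a y).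
Proof.
move=> h; apply: (J_feq (ci_lmul a h)) => w.
rewrite coef_cat coef_sl !coef_fmul mulN1r -sumrN -big_split /=.
apply: eq_bigr => p _; rewrite big_cat /= -sumrN; congr (_ + _).
rewrite /fscale_l big_map; apply: eq_bigr => q _ /=.
by case: emi => ?; rewrite ?oppr0 // mulN1r mulrN.
Qed.

Lemma ceq_fmul_r a x y : CEQ x y -> CEQ (fmul x a) (fmul y a).
Proof.
move=> h; apply: (J_feq (ci_rmul a h)) => w.
rewrite coef_cat coef_sl !coef_fmul mulN1r /= big_cat /=; congr (_ + _).
rewrite /fscale_l big_map -sumrN; apply: eq_bigr => p _ /=.
rewrite -sumrN; apply: eq_bigr => q _ /=.
by case: emi => ?; rewrite ?oppr0 // mulN1r mulNr.
Qed.

Lemma ceq_fmul a b x y : CEQ a b -> CEQ x y -> CEQ (fmul a x) (fmul b y).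
Proof.
move=> h1 h2; apply: ceq_trans (ceq_fmul_r _ h1) (ceq_fmul_l _ h2).
Qed.


Variables (I G : Type) (gG : group_on G) (wv : V -> I * G * I) (we : Ed -> I * G * I).
Hypothesis Hw : weight_mapping src rng gG wv we.
Notation B := (I * G * I)%type.
Notation bm := (bmul gG).
Notation bi := (binv gG).
Local Arguments bmul : simpl never.
Local Arguments binv : simpl never.
Implicit Types (x y : F) (p q : R * word V Ed).

Definition gwt (g : gen V Ed) : option B :=
  match g with Gv v => Some (wv v) | Ge a => Some (we a) | Gs a => bi (Some (we a)) end.
Definition wf (acc : option B) (h : gen V Ed) := bm acc (gwt h).
Definition wword (w : word V Ed) : option B := foldl wf (gwt w.1) w.2.

Lemma foldl_bm (a b : option B) l : foldl wf (bm a b) l = bm a (foldl wf b l).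
Proof. by elim: l a b => //= h l IH a b; rewrite /wf bmulA IH. Qed.

Lemma wword_cat u w : wword (wcat u w) = bm (wword u) (wword w).
Proof. by rewrite /wword /wcat /= foldl_cat /= {1}/wf foldl_bm. Qed.

Definition asb (P : Prop) : bool := if emi P then true else false.
Definition wsel (P : option B -> Prop) (x : F) : F :=
  [seq p <- x | asb (P (wword p.2))].

Lemma emiF (P : Prop) (T : Type) (a b : T) : ~ P -> (if emi P then a else b) = b.
Proof. by move=> h; case: emi. Qed.
Lemma emiT (P : Prop) (T : Type) (a b : T) : P -> (if emi P then a else b) = a.
Proof. by move=> h; case: emi. Qed.

Lemma coef_wsel P x w : coef (wsel P x) w = if asb (P (wword w)) then coef x w else 0.
Proof.
elim: x => [|[r u] x IH]; first by rewrite /wsel /= coef_nil; case: asb.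
rewrite /wsel /= -/(wsel P x).
case: (emi (u = w)) => [e|ne].
  by subst w; case E: asb; rewrite ?coef_cons IH ?E /=.
case E: (asb (P (wword u))); rewrite ?coef_cons IH /= (emiF _ _ ne) add0r //.
by rewrite add0r.
Qed.

Lemma wsel_cat P x y : wsel P (x ++ y) = wsel P x ++ wsel P y.
Proof. exact: filter_cat. Qed.

Lemma wsel_feq P x y : feq x y -> feq (wsel P x) (wsel P y).
Proof. by move=> e w; rewrite !coef_wsel e. Qed.

Lemma wsel_const P s0 x : List.Forall (fun p => wword p.2 = s0) x ->
  wsel P x = if asb (P s0) then x else [::].
Proof.
elim=> [|p l hp _ IH]; first by case: asb.
rewrite /wsel /= hp -/(wsel P l) IH; by case: asb.
Qed.

Lemma wv_idem v : bm (Some (wv v)) (Some (wv v)) = Some (wv v).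
Proof. by case: Hw => h _; apply: h. Qed.
Lemma H2 (a : Ed) : bm (Some (wv (src a))) (Some (we a)) = Some (we a).
Proof. by case: Hw => _ h; case: (h a). Qed.
Lemma H3 (a : Ed) : bm (Some (we a)) (Some (wv (rng a))) = Some (we a).
Proof. by case: Hw => _ h; case: (h a). Qed.
Lemma bi_wv v : bi (Some (wv v)) = Some (wv v).
Proof. by case: (idemP (wv_idem v)) => i ->; rewrite binvS ginv1. Qed.
Lemma H4 (a : Ed) : bm (Some (wv (rng a))) (bi (Some (we a))) = bi (Some (we a)).
Proof. by rewrite -{2}(H3 a) binv_mul bi_wv. Qed.
Lemma H5 (a : Ed) : bm (bi (Some (we a))) (Some (wv (src a))) = bi (Some (we a)).
Proof. by rewrite -{2}(H2 a) binv_mul bi_wv. Qed.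
Lemma H6 (a : Ed) : bm (bi (Some (we a))) (Some (we a)) = Some (wv (rng a)).
Proof.
case: (bmul_idem_r (H3 a)) => i [g [j [-> ->]]].
by rewrite binvS (bmulE gG j (ginv gG g) i g j) gmulVg.
Qed.
Lemma H7 (a : Ed) : bm (Some (we a)) (bi (Some (we a))) = Some (wv (src a)).
Proof.
case: (bmul_idem_l (H2 a)) => i [g [j [-> ->]]].
by rewrite binvS (bmulE gG i g j (ginv gG g) i) gmulgV.
Qed.

Lemma F1 (T : Type) (P : T -> Prop) (p : T) : P p -> List.Forall P [:: p].
Proof. by constructor. Qed.
Lemma F2 (T : Type) (P : T -> Prop) (p q : T) : P p -> P q -> List.Forall P [:: p; q].
Proof. by constructor => //; constructor. Qed.

Lemma crel_homog x : crel src rng X x -> exists s0, List.Forall (fun p : R * word V Ed => wword p.2 = s0) x.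
Proof.
case=> [v|v v' _|a|a|a|a|a|a a' _|v l _ _ hl].
- by exists (Some (wv v)); apply: F2; rewrite /wword /= /wf ?wv_idem.
- by eexists; apply: F1.
- by exists (Some (we a)); apply: F2; rewrite /wword /= /wf ?H2.
- by exists (Some (we a)); apply: F2; rewrite /wword /= /wf ?H3.
- by exists (bi (Some (we a))); apply: F2; rewrite /wword /= /wf ?H4.
- by exists (bi (Some (we a))); apply: F2; rewrite /wword /= /wf ?H5.
- by exists (Some (wv (rng a))); apply: F2; rewrite /wword /= /wf ?H6.
- by eexists; apply: F1.
- exists (Some (wv v)); apply List.Forall_app; split; last by apply: F1.
  apply/List.Forall_forall => p /List.in_map_iff [a [<- /hl <-]].
  by rewrite /wword /= /wf H7.
Qed.

Lemma fmul_cons p (a : F) x : fmul (p :: a) x = fmul [:: p] x ++ fmul a x.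
Proof. by rewrite /fmul /= cats0. Qed.

Lemma fmul_nilr x : fmul x ([::] : F) = [::].
Proof. by elim: x. Qed.

Lemma fmul_consr x q (a : F) : feq (fmul x (q :: a)) (fmul x [:: q] ++ fmul x a).
Proof.
move=> w; rewrite coef_cat !coef_fmul -big_split /=; apply: eq_bigr => p _.
by rewrite !big_cons big_nil addr0.
Qed.

Lemma fmul1r x q : fmul x [:: q] = [seq (p.1 * q.1, wcat p.2 q.2) | p <- x].
Proof. by rewrite /fmul allpairs1r. Qed.
Lemma fmul1l p x : fmul [:: p] x = [seq (p.1 * q.1, wcat p.2 q.2) | q <- x].
Proof. by rewrite /fmul /= cats0. Qed.

Lemma J_wsel x : J x -> forall P, J (wsel P x).
Proof.
elim=> {x}.
- move=> x /[dup] hx /crel_homog [s0 hs] P; rewrite (wsel_const P hs).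
  by case: asb; [apply: ci_rel | apply: ci_nil].
- by move=> P; apply: ci_nil.
- by move=> x y _ h1 _ h2 P; rewrite /wsel filter_cat; apply: ci_add; [apply: h1|apply: h2].
- move=> a x _ IH P; elim: a => [|p a IHa]; first exact: ci_nil.
  rewrite fmul_cons /wsel filter_cat; apply: ci_add => //.
  rewrite fmul1l filter_map.
  have := ci_lmul [:: p] (IH (fun s => P (bm (wword p.2) s))).
  rewrite fmul1l /wsel; congr (cideal _ _ _ (map _ _)); apply: eq_filter => q /=.
  by rewrite wword_cat.
- move=> x a _ IH P; elim: a => [|q a IHa]; first by rewrite fmul_nilr; exact: ci_nil.
  apply: (J_feq (x := wsel P (fmul x [:: q] ++ fmul x a))); last first.
    by apply: wsel_feq => w; rewrite fmul_consr.
  rewrite /wsel filter_cat; apply: ci_add => //.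
  rewrite fmul1r filter_map.
  have := ci_rmul [:: q] (IH (fun s => P (bm s (wword q.2)))).
  rewrite fmul1r /wsel; congr (cideal _ _ _ (map _ _)); apply: eq_filter => p /=.
  by rewrite wword_cat.
- by move=> r x _ IH P; rewrite /wsel /fscale_l filter_map; apply: (ci_lsc r (IH P)).
- by move=> r x _ IH P; rewrite /wsel /fscale_r filter_map; apply: (ci_rsc r (IH P)).
- move=> x y e _ IH P; apply: (J_feq (IH P)); exact: wsel_feq.
Qed.


Definition gstar (g : gen V Ed) : gen V Ed :=
  match g with Gv v => Gv Ed v | Ge a => Gs V a | Gs a => Ge V a end.
Definition tol (w : word V Ed) : seq (gen V Ed) := w.1 :: w.2.
Definition ofl (d : gen V Ed) (l : seq (gen V Ed)) : word V Ed :=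
  match l with h :: t => (h, t) | [::] => (d, [::]) end.
Definition wstar (w : word V Ed) : word V Ed := ofl w.1 (rev (map gstar (tol w))).

Lemma gstarK : involutive gstar. Proof. by case. Qed.
Lemma tol_inj u w : tol u = tol w -> u = w.
Proof. by case: u w => [g l] [h t] [-> ->]. Qed.
Lemma tol_wstar w : tol (wstar w) = rev (map gstar (tol w)).
Proof.
rewrite /wstar; case E: (rev _) => [|h t] //.
by move: (congr1 size E); rewrite size_rev.
Qed.
Lemma tol_wcat u w : tol (wcat u w) = tol u ++ tol w. Proof. by []. Qed.
Lemma wstarK w : wstar (wstar w) = w.
Proof. by apply: tol_inj; rewrite !tol_wstar map_rev revK (mapK gstarK). Qed.
Lemma wstar_cat u w : wstar (wcat u w) = wcat (wstar w) (wstar u).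
Proof. by apply: tol_inj; rewrite tol_wcat !tol_wstar tol_wcat map_cat rev_cat. Qed.

Definition fstar (x : F) : F := [seq (p.1, wstar p.2) | p <- x].

Lemma emi_iff (P Q : Prop) (T : Type) (a b : T) : (P <-> Q) ->
  (if emi P then a else b) = (if emi Q then a else b).
Proof. by move=> h; case: emi => hp; case: emi => hq //; exfalso; tauto. Qed.

Lemma coef_fstar x w : coef (fstar x) w = coef x (wstar w).
Proof.
rewrite /coef /fstar big_map; apply: eq_bigr => p _ /=; apply: emi_iff.
by split=> [<-|->]; rewrite wstarK.
Qed.

Lemma fstar_feq x y : feq x y -> feq (fstar x) (fstar y).
Proof. by move=> e w; rewrite !coef_fstar e. Qed.

Lemma fstarK x : fstar (fstar x) = x.
Proof. by rewrite /fstar -map_comp -[RHS]map_id; apply: eq_map => -[r w] /=; rewrite wstarK. Qed.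

Lemma fstar_cat x y : fstar (x ++ y) = fstar x ++ fstar y.
Proof. exact: map_cat. Qed.

Lemma fstar_sl r x : fstar (fscale_l r x) = fscale_l r (fstar x).
Proof. by rewrite /fstar /fscale_l -!map_comp. Qed.

Lemma fstar_sr r x : fstar (fscale_r r x) = fscale_r r (fstar x).
Proof. by rewrite /fstar /fscale_r -!map_comp. Qed.

Lemma J_fstar x : J x -> J (fstar x).
Proof.
elim=> {x}.
- move=> x; case=> [v|v v' h|a|a|a|a|a|a a' h|v l hX hn hl]; rewrite /fstar /=.
  + exact/ci_rel/rel_vv.
  + by apply/ci_rel/rel_vv' => e; apply: h.
  + exact/ci_rel/rel_ss.
  + exact/ci_rel/rel_rs.
  + exact/ci_rel/rel_er.
  + exact/ci_rel/rel_se.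
  + exact/ci_rel/rel_ce.
  + by apply/ci_rel/rel_ce' => e; apply: h.
  + rewrite map_cat -map_comp; exact/ci_rel/rel_ck.
- exact: ci_nil.
- by move=> x y _ h1 _ h2; rewrite fstar_cat; apply: ci_add.
- move=> a x _ IH; elim: a => [|p a IHa]; first exact: ci_nil.
  rewrite fmul_cons fstar_cat; apply: ci_add => //.
  have -> : fstar (fmul [:: p] x) = fscale_l p.1 (fmul (fstar x) [:: (1, wstar p.2)]).
    rewrite fmul1l fmul1r /fstar /fscale_l -!map_comp; apply: eq_map => q /=.
    by rewrite mulr1 wstar_cat.
  exact/ci_lsc/ci_rmul.
- move=> x a _ IH; elim: a => [|q a IHa]; first by rewrite fmul_nilr; exact: ci_nil.
  apply: (J_feq (x := fstar (fmul x [:: q] ++ fmul x a))); last first.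
    by apply: fstar_feq => w; rewrite fmul_consr.
  rewrite fstar_cat; apply: ci_add => //.
  have -> : fstar (fmul x [:: q]) = fscale_r q.1 (fmul [:: (1, wstar q.2)] (fstar x)).
    rewrite fmul1l fmul1r /fstar /fscale_r -!map_comp; apply: eq_map => p /=.
    by rewrite mul1r wstar_cat.
  exact/ci_rsc/ci_lmul.
- by move=> r x _ IH; rewrite fstar_sl; apply: ci_lsc.
- by move=> r x _ IH; rewrite fstar_sr; apply: ci_rsc.
- by move=> x y e _ IH; apply: (J_feq IH); apply: fstar_feq.
Qed.


Implicit Types (a b c : Ed) (v : V) (u w z : word V Ed).
Notation GV := (@Gv V Ed).
Notation GE := (@Ge V Ed).
Notation GS := (@Gs V Ed).
Definition J1 (w : word V Ed) := J [:: (1, w)].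
Definition C1 (u w : word V Ed) := CEQ [:: (1, u)] [:: (1, w)].

Lemma C1_refl w : C1 w w. Proof. exact: ceq_refl. Qed.
Lemma C1_sym u w : C1 u w -> C1 w u. Proof. exact: ceq_sym. Qed.
Lemma C1_trans u w z : C1 u w -> C1 w z -> C1 u z. Proof. exact: ceq_trans. Qed.
Lemma C1_J u w : C1 u w -> J1 w -> J1 u. Proof. exact: ceq_J. Qed.

Lemma C1_catl u w w' : C1 w w' -> C1 (wcat u w) (wcat u w').
Proof.
move=> h; have := ceq_fmul_l [:: (1, u)] h.
by rewrite /C1 !fmul1l /= mulr1.
Qed.
Lemma C1_catr u w w' : C1 w w' -> C1 (wcat w u) (wcat w' u).
Proof.
move=> h; have := ceq_fmul_r [:: (1, u)] h.
by rewrite /C1 !fmul1r /= mulr1.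
Qed.
Lemma J1_catl u w : J1 w -> J1 (wcat u w).
Proof. by move=> h; have := ci_lmul [:: (1, u)] h; rewrite /J1 fmul1l /= mulr1. Qed.
Lemma J1_catr u w : J1 w -> J1 (wcat w u).
Proof. by move=> h; have := ci_rmul [:: (1, u)] h; rewrite /J1 fmul1r /= mulr1. Qed.

Lemma C1_pre g l g' l' t : C1 (g, l) (g', l') -> C1 (g, l ++ t) (g', l' ++ t).
Proof.
by case: t => [|k t] h; [rewrite !cats0 | exact: (C1_catr (k, t) h)].
Qed.
Lemma J1_pre g l t : J1 (g, l) -> J1 (g, l ++ t).
Proof. by case: t => [|k t] h; [rewrite !cats0 | exact: (J1_catr (k, t) h)]. Qed.

Lemma rel_C1 A B0 : J [:: (1, A); (-1, B0)] -> C1 A B0.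
Proof. by rewrite /C1 /ceq /fscale_l /= mulr1. Qed.

Lemma R_vv v : C1 (GV v, [:: GV v]) (GV v, [::]).
Proof. exact/rel_C1/ci_rel/rel_vv. Qed.
Lemma R_vv' v v' : v <> v' -> J1 (GV v, [:: GV v']).
Proof. by move=> h; apply/ci_rel/rel_vv'. Qed.
Lemma R_se a : C1 (GV (src a), [:: GE a]) (GE a, [::]).
Proof. exact/rel_C1/ci_rel/rel_se. Qed.
Lemma R_er a : C1 (GE a, [:: GV (rng a)]) (GE a, [::]).
Proof. exact/rel_C1/ci_rel/rel_er. Qed.
Lemma R_rs a : C1 (GV (rng a), [:: GS a]) (GS a, [::]).
Proof. exact/rel_C1/ci_rel/rel_rs. Qed.
Lemma R_ss a : C1 (GS a, [:: GV (src a)]) (GS a, [::]).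
Proof. exact/rel_C1/ci_rel/rel_ss. Qed.
Lemma R_ce a : C1 (GS a, [:: GE a]) (GV (rng a), [::]).
Proof. exact/rel_C1/ci_rel/rel_ce. Qed.
Lemma R_ce' a a' : a <> a' -> J1 (GS a, [:: GE a']).
Proof. by move=> h; apply/ci_rel/rel_ce'. Qed.

Lemma Z_ve (u : V) a : u <> src a -> J1 (GV u, [:: GE a]).
Proof.
move=> h; apply: (C1_J (w := (GV u, [:: GV (src a); GE a]))).
  exact: (C1_catl (GV u, [::]) (C1_sym (R_se a))).
exact: (J1_pre [:: GE a] (R_vv' h)).
Qed.
Lemma Z_vs (u : V) a : u <> rng a -> J1 (GV u, [:: GS a]).
Proof.
move=> h; apply: (C1_J (w := (GV u, [:: GV (rng a); GS a]))).
  exact: (C1_catl (GV u, [::]) (C1_sym (R_rs a))).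
exact: (J1_pre [:: GS a] (R_vv' h)).
Qed.
Lemma Z_ee b a : rng b <> src a -> J1 (GE b, [:: GE a]).
Proof.
move=> h; apply: (C1_J (w := (GE b, [:: GV (rng b); GE a]))).
  exact: (C1_pre [:: GE a] (C1_sym (R_er b))).
exact: (J1_catl (GE b, [::]) (Z_ve h)).
Qed.
Lemma Z_es b c : rng b <> rng c -> J1 (GE b, [:: GS c]).
Proof.
move=> h; apply: (C1_J (w := (GE b, [:: GV (rng b); GS c]))).
  exact: (C1_pre [:: GS c] (C1_sym (R_er b))).
exact: (J1_catl (GE b, [::]) (Z_vs h)).
Qed.
Lemma Z_ev b v : rng b <> v -> J1 (GE b, [:: GV v]).
Proof.
move=> h; apply: (C1_J (w := (GE b, [:: GV (rng b); GV v]))).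
  exact: (C1_pre [:: GV v] (C1_sym (R_er b))).
exact: (J1_catl (GE b, [::]) (R_vv' h)).
Qed.
Lemma Z_sv b v : src b <> v -> J1 (GS b, [:: GV v]).
Proof.
move=> h; apply: (C1_J (w := (GS b, [:: GV (src b); GV v]))).
  exact: (C1_pre [:: GV v] (C1_sym (R_ss b))).
exact: (J1_catl (GS b, [::]) (R_vv' h)).
Qed.
Lemma Z_ss b c : src b <> rng c -> J1 (GS b, [:: GS c]).
Proof.
move=> h; apply: (C1_J (w := (GS b, [:: GV (src b); GS c]))).
  exact: (C1_pre [:: GS c] (C1_sym (R_ss b))).
exact: (J1_catl (GS b, [::]) (Z_vs h)).
Qed.

Definition valid v l v' l' := path_from src rng v l /\ path_from src rng v' l' /\
  path_rng rng v l = path_rng rng v' l'.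
Definition Red w := J1 w \/ exists v l v' l', valid v l v' l' /\ C1 w (mono_word v l v' l').

Lemma Red_C1 w w' : C1 w w' -> Red w' -> Red w.
Proof.
move=> h [j|[v [l [v' [l' [hv hc]]]]]]; first by left; exact: C1_J h j.
by right; exists v, l, v', l'; split=> //; exact: C1_trans h hc.
Qed.

Lemma mono_cons v a l v' l' :
  mono_word v (a :: l) v' l' = (GE a, [seq GE b | b <- l] ++ [seq GS b | b <- rev l']).
Proof. by []. Qed.
Lemma mono_nil_nil v v' : mono_word v [::] v' [::] = (GV v, [::]).
Proof. by []. Qed.
Lemma mono_nil_rcons v v' l c :
  mono_word v [::] v' (rcons l c) = (GS c, [seq GS b | b <- rev l]).
Proof. by rewrite /mono_word /= rev_rcons. Qed.
Lemma mono_eq v l v' l' h t : [seq GE b | b <- l] ++ [seq GS b | b <- rev l'] = h :: t ->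
  mono_word v l v' l' = (h, t).
Proof. by rewrite /mono_word => ->. Qed.

Lemma path_rng_rcons v l c : path_rng rng v (rcons l c) = rng c.
Proof. by elim: l v => //= a l IH v. Qed.
Lemma path_from_rcons v l c :
  path_from src rng v (rcons l c) <-> path_from src rng v l /\ src c = path_rng rng v l.
Proof.
elim: l v => [|a l IH] v /=; first by split=> [[]|[]].
rewrite IH; tauto.
Qed.

Lemma step_v (u : V) v l v' l' : valid v l v' l' -> Red (wcat (GV u, [::]) (mono_word v l v' l')).
Proof.
case: l => [|a l1].
  case/lastP: l' => [|l'' c].
    move=> [_ [_ /= e]]; subst v'; rewrite mono_nil_nil.
    have [<-|ne] := emi (u = v); last by left; exact: R_vv'.
    by right; exists u, [::], u, [::]; split; [done | exact: R_vv].
  move=> hv; have := hv; move=> [_ [_ /=]]; rewrite path_rng_rcons => e.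
  rewrite mono_nil_rcons /wcat /=.
  have [ue|ne] := emi (u = rng c); last by left; exact: (J1_pre _ (Z_vs ne)).
  right; exists v, [::], v', (rcons l'' c); split=> //.
  rewrite mono_nil_rcons ue; exact: (C1_pre _ (R_rs c)).
move=> hv; have := hv; move=> [/= [ea _] _].
rewrite mono_cons /wcat /=.
have [ue|ne] := emi (u = src a); last by left; exact: (J1_pre _ (Z_ve ne)).
right; exists v, (a :: l1), v', l'; split=> //.
rewrite mono_cons ue; exact: (C1_pre _ (R_se a)).
Qed.


Lemma step_e b v l v' l' : valid v l v' l' -> Red (wcat (GE b, [::]) (mono_word v l v' l')).
Proof.
case: l => [|a l1].
  case/lastP: l' => [|l'' c].
    move=> [_ [_ /= e]]; subst v'; rewrite mono_nil_nil.
    have [e|ne] := emi (rng b = v); last by left; exact: Z_ev.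
    right; exists (src b), [:: b], (rng b), [::]; split; first by rewrite /valid /=.
    by rewrite -e; exact: R_er.
  move=> hv; have := hv; move=> [_ [hp /=]]; rewrite path_rng_rcons => e.
  rewrite mono_nil_rcons /wcat /=.
  have [be|ne] := emi (rng b = rng c); last by left; exact: (J1_pre _ (Z_es ne)).
  right; exists (src b), [:: b], v', (rcons l'' c); split.
    by rewrite /valid /= path_rng_rcons.
  by rewrite mono_cons /= rev_rcons; exact: C1_refl.
move=> hv; have := hv; move=> [/= [ea hp1] [hp2 hr]].
rewrite mono_cons /wcat /=.
have [be|ne] := emi (rng b = src a); last by left; exact: (J1_pre _ (Z_ee ne)).
right; exists (src b), [:: b, a & l1], v', l'; split.
  by rewrite /valid /=; do !split.
by rewrite mono_cons; exact: C1_refl.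
Qed.

Lemma step_s b v l v' l' : valid v l v' l' -> Red (wcat (GS b, [::]) (mono_word v l v' l')).
Proof.
case: l => [|a l1].
  case/lastP: l' => [|l'' c].
    move=> [_ [_ /= e]]; subst v'; rewrite mono_nil_nil.
    have [e|ne] := emi (src b = v); last by left; exact: Z_sv.
    right; exists (rng b), [::], (src b), [:: b]; split; first by rewrite /valid /=.
    by rewrite -e; exact: R_ss.
  move=> hv; have := hv; move=> [hp0 [hp /=]]; rewrite path_rng_rcons => e.
  rewrite mono_nil_rcons /wcat /=.
  have [be|ne] := emi (src b = rng c); last by left; exact: (J1_pre _ (Z_ss ne)).
  right; exists (rng b), [::], v', (rcons (rcons l'' c) b); split.
    split=> //; split; last by rewrite path_rng_rcons.
    by apply/path_from_rcons; rewrite path_rng_rcons.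
  by rewrite mono_nil_rcons rev_rcons; exact: C1_refl.
move=> hv; have := hv; move=> [/= [ea hp1] [hp2 hr]].
rewrite mono_cons /wcat /=.
have [be|ne] := emi (b = a); last by left; exact: (J1_pre _ (R_ce' ne)).
subst b; apply: (Red_C1 (C1_pre _ (R_ce a))) => /=.
case E: ([seq GE b | b <- l1] ++ [seq GS b | b <- rev l']) => [|h t].
  right; exists (rng a), [::], (rng a), [::]; split; first by [].
  exact: C1_refl.
have hv1 : valid (rng a) l1 v' l' by [].
have := step_v (rng a) hv1; rewrite (mono_eq (rng a) v' E) /wcat /=.
exact.
Qed.

Lemma red w : Red w.
Proof.
case: w => g gs; elim: gs g => [|h t IH] g.
  case: g => [v|a|a]; right.
  - by exists v, [::], v, [::]; split; [done | exact: C1_refl].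
  - by exists (src a), [:: a], (rng a), [::]; split; [rewrite /valid /= | exact: C1_refl].
  - by exists (rng a), [::], (src a), [:: a]; split; [rewrite /valid /= | exact: C1_refl].
have -> : (g, h :: t) = wcat (g, [::]) (h, t) by [].
case: (IH h) => [j|[v [l [v' [l' [hv hc]]]]]]; first by left; exact: J1_catl.
apply: (Red_C1 (C1_catl _ hc)).
case: g => [u|b|b]; [exact: step_v | exact: step_e | exact: step_s].
Qed.


Definition fw (acc : option B) (e : Ed) := bm acc (Some (we e)).

Lemma PW_aux l : forall (u : V) (d0 : B), path_from src rng u l ->
  bm (Some d0) (Some (wv u)) = Some d0 ->
  exists d1, foldl fw (Some d0) l = Some d1 /\
    bm (Some d1) (Some (wv (path_rng rng u l))) = Some d1 /\
    (forall e, bm (Some e) (Some d0) = Some d0 -> bm (Some e) (Some d1) = Some d1).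
Proof.
elim: l => [|c l IH] u d0 /=.
  by move=> _ h; exists d0.
move=> [ec hp] h.
case: (bmul_idem_r h) => i [g [j [e1 e2]]].
have := H2 c; rewrite ec => h2.
case: (bmul_idem_l h2) => i' [g' [j' [e3 e4]]].
move: e4; rewrite e2 => -[ej].
have hb : bm (Some d0) (Some (we c)) = Some (i, gmul gG g g', j').
  by rewrite e1 e3 -ej bmulE.
have h3 : bm (Some (i, gmul gG g g', j')) (Some (wv (rng c))) = Some (i, gmul gG g g', j').
  by rewrite -hb bmulA H3.
case: (IH (rng c) _ hp h3) => d1 [f1 [f2 f3]].
exists d1; rewrite /= /fw hb; split=> //; split=> // e he.
apply: f3; by rewrite -hb -bmulA he.
Qed.

Lemma PW v l : path_from src rng v l -> exists m1, wpath gG wv we v l = Some m1 /\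
  bm (Some (wv v)) (Some m1) = Some m1 /\ bm (Some m1) (Some (wv (path_rng rng v l))) = Some m1.
Proof.
case: l => [|a l1] /=.
  by move=> _; exists (wv v); rewrite wv_idem.
move=> [ea hp].
case: (PW_aux hp (H3 a)) => m1 [f1 [f2 f3]].
exists m1; split; first exact: f1.
split=> //; apply: f3; rewrite -ea; exact: H2.
Qed.

Lemma wword_path a l1 : wword (GE a, [seq GE b | b <- l1]) = foldl fw (Some (we a)) l1.
Proof. by rewrite /wword /=; elim: l1 (Some (we a)) => //= c l IH acc; rewrite IH. Qed.

Lemma wword_wstar w : wword (wstar w) = bi (wword w).
Proof.
case: w => g gs; elim/last_ind: gs => [|t h IH].
  by case: g => [v|a|a] /=; rewrite ?bi_wv ?binvK.
rewrite -cats1.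
have -> : (g, t ++ [:: h]) = wcat (g, t) (h, [::]) by [].
rewrite wstar_cat !wword_cat IH binv_mul; congr (bm _ _).
by case: h => [v|a|a] //=; rewrite ?bi_wv ?binvK.
Qed.

Lemma mono_split v a l1 v' c l1' :
  mono_word v (a :: l1) v' (c :: l1') =
  wcat (GE a, [seq GE b | b <- l1]) (wstar (GE c, [seq GE b | b <- l1'])).
Proof.
apply: tol_inj; rewrite mono_cons tol_wcat tol_wstar /tol /=.
rewrite -map_comp map_rev; by congr (_ :: _ ++ _).
Qed.

Lemma tol_mono v l v' l' : [seq GE b | b <- l] ++ [seq GS b | b <- rev l'] <> [::] ->
  tol (mono_word v l v' l') = [seq GE b | b <- l] ++ [seq GS b | b <- rev l'].
Proof. by case E: (_ ++ _) => [|h t] // _; rewrite (mono_eq _ _ E). Qed.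

Lemma mono_nil_cons v v' c l1' :
  mono_word v [::] v' (c :: l1') = wstar (GE c, [seq GE b | b <- l1']).
Proof.
apply: tol_inj; rewrite tol_mono; last by rewrite /= rev_cons map_rcons => /(congr1 size); rewrite size_rcons.
rewrite tol_wstar /tol /= -map_comp; exact: (map_rev GS (c :: l1')).
Qed.

Lemma mono_cons_nil v a l1 v' :
  mono_word v (a :: l1) v' [::] = (GE a, [seq GE b | b <- l1]).
Proof. by rewrite mono_cons /= cats0. Qed.

Lemma wword_mono v l v' l' : valid v l v' l' ->
  exists s, wword (mono_word v l v' l') = Some s /\ wmono gG wv we v l v' l' = Some s.
Proof.
move=> [hp [hp' hr]].
case: (PW hp) => m1 [wm1 [lb rb]]; case: (PW hp') => m2 [wm2 [lb' rb']].
have key : wword (mono_word v l v' l') = bm (wpath gG wv we v l) (bi (wpath gG wv we v' l')).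
  move: hp hr wm1 rb; case: l => [|a l1] hp hr wm1 rb;
  move: hp' hr wm2 rb'; case: l' => [|c l1'] hp' hr wm2 rb'.
  - rewrite /= in hr; subst v'.
    by rewrite mono_nil_nil /wpath bi_wv wv_idem.
  - rewrite mono_nil_cons wword_wstar wword_path /= in hr *.
    rewrite -/(wpath gG wv we v' (c :: l1')) wm2 hr.
    by rewrite -(bi_wv (path_rng rng (rng c) l1')) -binv_mul; rewrite /= in rb'; rewrite rb'.
  - rewrite mono_cons_nil wword_path /= in hr *.
    rewrite -/(wpath gG wv we v (a :: l1)) wm1 -hr bi_wv.
    by rewrite rb.
  - by rewrite mono_split wword_cat wword_wstar !wword_path.
rewrite -hr in rb'.
have [s E] : exists s, bm (Some m1) (bi (Some m2)) = Some s.
  case: (bmul_idem_r rb) => i [g [j [e1 e2]]].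
  case: (bmul_idem_r rb') => i' [g' [j' [e3 e4]]].
  move: e4; rewrite e2 => -[ej]; subst m1 m2; rewrite binvS -ej bmulE.
  by eexists.
exists s; split; first by rewrite key wm1 wm2.
by rewrite /wmono wm1 wm2.
Qed.


Notation CP := (@Defs.comp V Ed src rng R X I G gG wv we).
Notation SW := (@span_w V Ed src rng R I G gG wv we).

Lemma asbT (P : Prop) : P -> asb P = true. Proof. by rewrite /asb; case: emi. Qed.
Lemma asbF (P : Prop) : ~ P -> asb P = false. Proof. by rewrite /asb; case: emi. Qed.

Lemma C1_weight w z : C1 w z -> wword w <> wword z -> J1 w.
Proof.
move=> h ne; have := J_wsel h (fun s => s = wword w).
rewrite /wsel /= asbT // asbF //; by move=> e; apply: ne.
Qed.

Definition RedW w := J1 w \/ exists v l v' l' s, valid v l v' l' /\ C1 w (mono_word v l v' l') /\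
  wword w = Some s /\ wmono gG wv we v l v' l' = Some s.

Lemma redW w : RedW w.
Proof.
case: (red w) => [j|[v [l [v' [l' [hv hc]]]]]]; first by left.
case: (wword_mono hv) => s [e1 e2].
have [e|ne] := emi (wword w = wword (mono_word v l v' l')).
  by right; exists v, l, v', l', s; rewrite e.
by left; exact: C1_weight hc ne.
Qed.

Lemma J_single r w : J1 w -> J [:: (r, w)].
Proof. by move=> h; have := ci_lsc r h; rewrite /fscale_l /= mulr1. Qed.
Lemma C_single r w z : C1 w z -> CEQ [:: (r, w)] [:: (r, z)].
Proof. by move=> h; have := ceq_sl r h; rewrite /fscale_l /= !mulr1. Qed.

Lemma SW_single v l v' l' s r : valid v l v' l' -> wmono gG wv we v l v' l' = Some s ->
  SW s [:: (r, mono_word v l v' l')].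
Proof.
move=> [h1 [h2 h3]] e; apply: F1; exists v, l, v', l'; do !split => //.
Qed.

Lemma CP_nil t : CP t [::].
Proof. case: t => [s|]; [exists [::]; split; [constructor | exact: ceq_refl] | exact: ci_nil]. Qed.

Lemma CP_ceq t x y : CEQ x y -> CP t y -> CP t x.
Proof.
case: t => [s|] h; last exact: ceq_J h.
by move=> [z [hz e]]; exists z; split=> //; exact: ceq_trans h e.
Qed.

Lemma CP_addJ t x y : J y -> CP t x -> CP t (y ++ x).
Proof.
move=> hy; apply: CP_ceq; rewrite -[x in CEQ _ x]cat0s.
apply: ceq_cat; [exact: J_ceq0 | exact: ceq_refl].
Qed.

Lemma reduce_list st (z : F) : List.Forall (fun p : R * word V Ed => wword p.2 = st) z -> CP st z.
Proof.
elim=> [|[r w] z' hw _ IH]; first exact: CP_nil.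
rewrite /= in hw.
case: (redW w) => [j|[v [l [v' [l' [s [hv [hc [ew em]]]]]]]]].
  by rewrite -cat1s; apply: CP_addJ => //; exact: J_single.
move: IH; rewrite -hw ew => -[y0 [hy e]].
exists ((r, mono_word v l v' l') :: y0); split.
  by constructor => //; exists v, l, v', l'; case: hv => h1 [h2 h3]; do !split.
by rewrite -cat1s -[_ :: y0]cat1s; apply: ceq_cat => //; exact: C_single.
Qed.

Lemma span_weight s y : SW s y -> List.Forall (fun p : R * word V Ed => wword p.2 = Some s) y.
Proof.
elim=> [|p y1 [v [l [v' [l' [h1 [h2 [h3 [h4 h5]]]]]]]] _ IH]; constructor => //.
have hv : valid v l v' l' by [].
case: (wword_mono hv) => s' [e1 e2]; rewrite h4 e1; congruence.
Qed.

Lemma graded : graded_ring_inducing src rng R X gG wv we.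
Proof.
split; [|split; [|split]].
- move=> t; split; first exact: CP_nil.
  case: t => [s|]; split.
  + move=> x y [x0 [hx ex]] [y0 [hy ey]]; exists (x0 ++ y0); split.
      by apply/List.Forall_app.
    exact: ceq_cat.
  + move=> x [x0 [hx ex]]; exists (fscale_l (-1) x0); split; last exact: ceq_sl.
    by elim: hx => [|p y hp _ IH] /=; constructor.
  + by move=> x y; apply: ci_add.
  + by move=> x; apply: ci_lsc.
- elim=> [|[r w] x [l [hl e]]].
    by exists [::]; split; [constructor | exact: ceq_refl].
  case: (redW w) => [j|[v [l1 [v' [l' [s [hv [hc [ew em]]]]]]]]].
    exists l; split => //; rewrite -cat1s -[flatten _]cat0s.
    by apply: ceq_cat => //; apply: J_ceq0; exact: J_single.
  exists ((s, [:: (r, w)]) :: l); split.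
    constructor => //=; exists [:: (r, mono_word v l1 v' l')]; split.
      exact: SW_single.
    exact: C_single.
  by have := ceq_cat (ceq_refl [:: (r, w)]) e.
- move=> l nd hc hJ.
  have [l' [h2 hs]] : exists l' : seq (B * F),
      List.Forall2 (fun p q : B * F => p.1 = q.1 /\ CEQ p.2 q.2) l l' /\
      List.Forall (fun q : B * F => SW q.1 q.2) l'.
    elim: hc {nd hJ} => [|p l0 [y [hy e]] _ [l' [h2 hs]]].
      by exists [::]; split; constructor.
    by exists ((p.1, y) :: l'); split; constructor.
  have hm : [seq kq.1 | kq <- l'] = [seq kp.1 | kp <- l].
    by elim: h2 {hs nd hc hJ} => [|p q l0 l1 [e _] _ IH] //=; rewrite e IH.
  have hJ' : J (flatten [seq kq.2 | kq <- l']).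
    apply: (ceq_J _ hJ); apply: ceq_sym.
    by elim: h2 {hs nd hc hJ hm} => [|p q l0 l1 [_ e] _ IH] /=; [exact: ceq_refl | exact: ceq_cat].
  rewrite -hm in nd.
  have hw : List.Forall (fun q : B * F =>
      List.Forall (fun p : R * word V Ed => wword p.2 = Some q.1) q.2) l'.
    by elim: hs {h2 hm nd hJ'} => [|q l0 hq _ IH]; constructor => //; exact: span_weight.
  have sel : forall q : B * F, List.In q l' ->
      wsel (fun s => s = Some q.1) (flatten [seq kq0.2 | kq0 <- l']) = q.2.
    move=> q; clear -nd hw; elim: l' nd hw => [|q0 l0 IH] //= nd hw hin.
    inversion nd as [|a b nin nd0]; subst.
    inversion hw as [|a b hw0 hwr]; subst.
    have zero : forall s0, ~ List.In s0 [seq kq1.1 | kq1 <- l0] ->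
        wsel (fun s => s = Some s0) (flatten [seq kq1.2 | kq1 <- l0]) = [::].
      move=> s0 ns; clear -ns hwr; elim: hwr ns => [|q1 l1 hq1 _ IH] //= ns.
      rewrite wsel_cat IH; last by move=> h; apply: ns; right.
      rewrite (wsel_const _ hq1) asbF // => -[e]; apply: ns; left; by [].
    rewrite wsel_cat.
    case: hin => [<-|hin].
      rewrite (wsel_const _ hw0) asbT // zero // cats0 //.
    rewrite (wsel_const _ hw0) asbF; last first.
      move=> -[e]; apply: nin; rewrite e; exact: (List.in_map fst).
    by rewrite IH.
  have hJq : List.Forall (fun q : B * F => J q.2) l'.
    apply/List.Forall_forall => q hin; rewrite -(sel q hin); exact: J_wsel.
  clear -h2 hJq; elim: h2 hJq => [|p q l0 l1 [_ e] _ IH] hJq; constructor.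
    by inversion hJq; subst; exact: ceq_J e _.
  by inversion hJq; subst; apply: IH.
- case=> [s|] [t|] x y hx hy; last first.
  + exact: ci_rmul.
  + exact: ci_rmul.
  + rewrite bmul0r; exact: ci_lmul.
  case: hx => [x0 [hx ex]]; case: hy => [y0 [hy ey]].
  apply: (CP_ceq (ceq_fmul ex ey)); apply: reduce_list.
  apply: (Forall_allpairs (span_weight hx) (span_weight hy)) => p q /= e1 e2.
  by rewrite wword_cat e1 e2.
Qed.


Lemma mapGS (s : seq Ed) : [seq gstar i | i <- [seq GS b | b <- s]] = [seq GE b | b <- s].
Proof. by elim: s => //= ? ? ->. Qed.
Lemma mapGE (s : seq Ed) : [seq gstar i | i <- [seq GE b | b <- s]] = [seq GS b | b <- s].
Proof. by elim: s => //= ? ? ->. Qed.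

Lemma wstar_mono v l v' l' : path_rng rng v l = path_rng rng v' l' ->
  wstar (mono_word v l v' l') = mono_word v' l' v l.
Proof.
case: l => [|a l1]; case: l' => [|c l1'] hr.
- by rewrite /= in hr; subst.
- by rewrite mono_nil_cons wstarK mono_cons_nil.
- by rewrite mono_nil_cons mono_cons_nil.
- apply: tol_inj; rewrite tol_wstar !tol_mono //.
  by rewrite map_cat rev_cat !map_rev revK mapGS mapGE.
Qed.

Definition sinv (s : B) : B := let: (i, g, j) := s in (j, ginv gG g, i).
Lemma bi_sinv s : bi (Some s) = Some (sinv s). Proof. by case: s => [[i g] j]. Qed.

Lemma SW_fstar s y : SW s y -> SW (sinv s) (fstar y).
Proof.
elim=> [|p y0 [v [l [v' [l' [h1 [h2 [h3 [h4 h5]]]]]]]] _ IH]; constructor => //.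
exists v', l', v, l; do !split => //.
  by rewrite /= h4 wstar_mono.
by rewrite /wmono -(binvK gG (wpath gG wv we v' l')) -binv_mul -/(wmono gG wv we v l v' l') h5 bi_sinv.
Qed.

Lemma invol : has_anti_graded_involution src rng R X gG wv we.
Proof.
have hc : forall (t : option B) x, CP t x -> CP (bi t) (fstar x).
  case=> [s|] x; last exact: J_fstar.
  move=> [y [hy e]]; rewrite bi_sinv; exists (fstar y); split; first exact: SW_fstar.
  by have := J_fstar e; rewrite /ceq fstar_cat fstar_sl.
exists fstar; split; [|split; [|split]].
- by move=> x y e; have := J_fstar e; rewrite /ceq fstar_cat fstar_sl.
- by move=> x; rewrite fstarK; exact: ceq_refl.
- exact: hc.
- move=> t x h; exists (fstar x); split; last by rewrite fstarK; exact: ceq_refl.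
  by rewrite -(binvK gG t); apply: hc.
Qed.

End Main.

Theorem proposition3p5 (R : pzRingType) (V Ed : Type) (src rng : Ed -> V)
    (X : V -> Prop) (I G : Type) (gG : group_on G)
    (wv : V -> I * G * I) (we : Ed -> I * G * I) :
  (forall v, X v -> regular src v) ->
  weight_mapping src rng gG wv we ->
  (graded_ring_inducing src rng R X gG wv we /\
   has_anti_graded_involution src rng R X gG wv we) /\
  (graded_ring_inducing src rng R (regular src) gG wv we /\
   has_anti_graded_involution src rng R (regular src) gG wv we).
Proof.
move=> _ Hw.
split; split; [exact: graded | exact: invol | exact: graded | exact: invol].
Qed.
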